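(* Let $M$ be a random variable with values in $[-1,1]$ with $\mu_1(M)=\mathbb E M>0$, and let $\mu_2(M)=\mathbb E M^2$ and $\mathcal C_M=1-\mu_1(M)^2/\mu_2(M)$. Then there exists a random variable $\widetilde M$ with values in $[-1,1]$ such that $\mu_1(\widetilde M)=\mu_1(M)$, $\mu_2(\widetilde M)=\mu_2(M)$ and $\mathcal C_{\widetilde M}=\mathcal C_M=\Pr(\widetilde M\le 0)$, if and only if $0<\mu_2(M)\le\mu_1(M)$.
   Context: For a random variable $N$ with $\mathbb E N^2>0$, $\mathcal C_N=1-(\mathbb E N)^2/\mathbb E N^2$. *)

(* Defs.v *)
(* A real random variable M with values in [-1,1] is represented by its law,
   i.e. by its cumulative distribution function F(x) = P(M <= x).
   Such F are exactly the nondecreasing, right-continuous functions with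
   F = 0 on (-oo,-1) and F = 1 on [1,+oo).  Expectations E g(M) of continuous
   g are Riemann--Stieltjes integrals  int_{[-2,1]} g dF  (the left end -2 < -1
   makes a possible atom at -1 counted). *)
From Stdlib Require Import Reals Lra.
Open Scope R_scope.

Definition cdf_pm1 (F : R -> R) : Prop :=
  (forall x y, x <= y -> F x <= F y) /\
  (forall x, x < -1 -> F x = 0) /\
  (forall x, 1 <= x -> F x = 1) /\
  (forall x eps, 0 < eps -> exists delta, 0 < delta /\
      forall y, x <= y < x + delta -> F y - F x < eps).

Fixpoint rs_sum (F g : R -> R) (x t : nat -> R) (n : nat) : R :=
  match n with
  | O => 0
  | S k => rs_sum F g x t k + g (t k) * (F (x (S k)) - F (x k))
  end.

Definition RS_integral (F g : R -> R) (a b I : R) : Prop :=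
  forall eps, 0 < eps -> exists delta, 0 < delta /\
    forall (n : nat) (x t : nat -> R),
      x O = a -> x n = b ->
      (forall i, (i < n)%nat -> x i < x (S i) /\ x (S i) - x i < delta) ->
      (forall i, (i < n)%nat -> x i <= t i <= x (S i)) ->
      Rabs (rs_sum F g x t n - I) < eps.

Definition expect (F g : R -> R) (m : R) : Prop := RS_integral F g (-2) 1 m.

Definition mu1_is (F : R -> R) (m1 : R) : Prop := expect F (fun x => x) m1.
Definition mu2_is (F : R -> R) (m2 : R) : Prop := expect F (fun x => x ^ 2) m2.

Definition Ccoef (m1 m2 : R) : R := 1 - m1 ^ 2 / m2.

Definition prob_le (F : R -> R) (c : R) : R := F c.

(* Main.v *)
Require Import Defs.
From Stdlib Require Import Reals Lra Lia.
Open Scope R_scope.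

Lemma rs_sum_lin (F1 F2 g : R -> R) (p q : R) x t n :
  rs_sum (fun y => p * F1 y + q * F2 y) g x t n =
  p * rs_sum F1 g x t n + q * rs_sum F2 g x t n.
Proof. induction n; cbn [rs_sum]; [ring|rewrite IHn; ring]. Qed.

Lemma rs_sum_quad (F : R -> R) (a : R) x t n :
  rs_sum F (fun y => (y - a)^2) x t n =
  rs_sum F (fun y => y^2) x t n - 2*a*rs_sum F (fun y => y) x t n
  + a^2 * (F (x n) - F (x O)).
Proof. induction n; cbn [rs_sum]; [ring|rewrite IHn; ring]. Qed.

Lemma rs_sum_nonneg (F g : R -> R) x t n :
  (forall u v, u <= v -> F u <= F v) -> (forall y, 0 <= g y) ->
  (forall i, (i < n)%nat -> x i < x (S i)) -> 0 <= rs_sum F g x t n.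
Proof.
  intros HF Hg Hx. induction n; simpl; [lra|].
  assert (0 <= rs_sum F g x t n) by (apply IHn; intros; apply Hx; auto).
  assert (F (x n) <= F (x (S n))) by (apply HF; left; apply Hx; auto).
  assert (0 <= g (t n)) by apply Hg. nra.
Qed.

Definition xs (n : nat) (i : nat) : R := -2 + INR i / INR n.

Lemma xs_0 n : xs n 0 = -2.
Proof. unfold xs; simpl; unfold Rdiv; rewrite Rmult_0_l; ring. Qed.

Lemma xs_end n : (0 < n)%nat -> xs n (3*n) = 1.
Proof.
  intros H. unfold xs. rewrite mult_INR. simpl (INR 3).
  assert (0 < INR n) by (apply lt_0_INR; auto). field; lra.
Qed.

Lemma xs_step n i : (0 < n)%nat -> xs n (S i) - xs n i = 1 / INR n.
Proof.
  intros H. unfold xs. rewrite S_INR.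
  assert (0 < INR n) by (apply lt_0_INR; auto). field; lra.
Qed.

Lemma small_n d : 0 < d -> exists n, (0 < n)%nat /\ 1 / INR n < d.
Proof.
  intros Hd. destruct (archimed (1/d)) as [H1 _].
  destruct (up (1/d)) eqn:E; try (simpl in H1).
  - assert (0 < 1/d) by (apply Rdiv_lt_0_compat; lra). simpl in H1; lra.
  - exists (Pos.to_nat p). split. apply Pos2Nat.is_pos.
    assert (INR (Pos.to_nat p) = IZR (Z.pos p)).
    { rewrite INR_IZR_INZ. f_equal. lia. }
    rewrite H. assert (0 < 1/d) by (apply Rdiv_lt_0_compat; lra).
    assert (0 < IZR (Z.pos p)) by lra.
    apply (Rmult_lt_reg_r (IZR (Z.pos p))); auto.
    unfold Rdiv. rewrite Rmult_assoc, Rinv_l, Rmult_1_r by lra.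
    apply (Rmult_lt_reg_l (/d)). apply Rinv_0_lt_compat; lra.
    rewrite <- Rmult_assoc, Rinv_l, Rmult_1_l by lra. lra.
  - assert (0 < 1/d) by (apply Rdiv_lt_0_compat; lra).
    assert (IZR (Z.neg p) < 0) by (apply IZR_lt; lia). lra.
Qed.

Lemma xs_good n d : (0 < n)%nat -> 1 / INR n < d ->
  forall i, (i < 3*n)%nat -> xs n i < xs n (S i) /\ xs n (S i) - xs n i < d.
Proof.
  intros Hn Hd i _. pose proof (xs_step n i Hn).
  assert (0 < INR n) by (apply lt_0_INR; auto).
  assert (0 < 1 / INR n) by (apply Rdiv_lt_0_compat; lra). lra.
Qed.

Lemma xs_le1 n i : (0 < n)%nat -> (i <= 3*n)%nat -> xs n i <= 1.
Proof.
  intros Hn Hi. unfold xs. assert (0 < INR n) by (apply lt_0_INR; auto).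
  apply le_INR in Hi. rewrite mult_INR in Hi. simpl (INR 3) in Hi.
  assert (INR i / INR n <= 3).
  { apply (Rmult_le_reg_r (INR n)); auto. unfold Rdiv.
    rewrite Rmult_assoc, Rinv_l, Rmult_1_r by lra. lra. }
  lra.
Qed.

Lemma cdf_mono F : cdf_pm1 F -> forall u v, u <= v -> F u <= F v.
Proof. intros [H _]; exact H. Qed.

Lemma mean_le F m1 : cdf_pm1 F -> mu1_is F m1 -> m1 <= 1 - F 0.
Proof.
  intros HF Hm. destruct HF as [Hmon [Hlo [Hhi _]]].
  destruct (Rle_dec m1 (1 - F 0)) as [h|h]; auto. exfalso.
  assert (Heps : 0 < m1 - (1 - F 0)) by lra.
  destruct (Hm _ Heps) as [d [Hd Hint]].
  destruct (small_n d Hd) as [n [Hn Hnd]].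
  assert (Hb : forall k, (k <= 3*n)%nat ->
    rs_sum F (fun y => y) (xs n) (xs n) k <= Rmax 0 (F (xs n k) - F 0)).
  { induction k; intros Hk.
    - simpl. apply Rmax_l.
    - simpl. assert (IH := IHk ltac:(lia)).
      assert (Hxk := xs_le1 n k Hn ltac:(lia)).
      assert (Hs := xs_step n k Hn).
      assert (0 < INR n) by (apply lt_0_INR; auto).
      assert (0 < 1 / INR n) by (apply Rdiv_lt_0_compat; lra).
      assert (Hmk : F (xs n k) <= F (xs n (S k))) by (apply Hmon; lra).
      destruct (Rlt_dec (xs n k) 0) as [hl|hl].
      + assert (F (xs n k) <= F 0) by (apply Hmon; lra).
        revert IH. unfold Rmax. destruct (Rle_dec 0 (F (xs n k) - F 0));
        destruct (Rle_dec 0 (F (xs n (S k)) - F 0)); intros; nra.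
      + assert (F 0 <= F (xs n k)) by (apply Hmon; lra).
        revert IH. unfold Rmax. destruct (Rle_dec 0 (F (xs n k) - F 0));
        destruct (Rle_dec 0 (F (xs n (S k)) - F 0)); intros; nra. }
  assert (H3 := Hb (3*n)%nat (le_n _)). rewrite xs_end in H3 by auto.
  rewrite (Hhi 1) in H3 by lra.
  assert (F 0 <= 1) by (rewrite <- (Hhi 1) by lra; apply Hmon; lra).
  rewrite Rmax_right in H3 by lra.
  assert (Ha := Hint (3*n)%nat (xs n) (xs n) (xs_0 n) (xs_end n Hn)
     (xs_good n d Hn Hnd) ltac:(intros i Hi; split; [lra | left; apply (xs_good n d Hn Hnd i Hi)])).
  apply Rabs_def2 in Ha. lra.
Qed.

Lemma jensen F m1 m2 : cdf_pm1 F -> mu1_is F m1 -> mu2_is F m2 -> 0 < m1 ->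
  m1 ^ 2 <= m2.
Proof.
  intros HF H1 H2 Hm1. destruct HF as [Hmon [Hlo [Hhi _]]].
  destruct (Rle_dec (m1^2) m2) as [h|h]; auto. exfalso.
  set (eps := (m1^2 - m2) / (2 * (1 + 2*m1))).
  assert (Heps : 0 < eps) by (unfold eps; apply Rdiv_lt_0_compat; lra).
  destruct (H1 _ Heps) as [d1 [Hd1 I1]].
  destruct (H2 _ Heps) as [d2 [Hd2 I2]].
  assert (Hd : 0 < Rmin d1 d2) by (apply Rmin_pos; auto).
  destruct (small_n _ Hd) as [n [Hn Hnd]].
  assert (Hnd1 : 1 / INR n < d1) by (pose proof (Rmin_l d1 d2); lra).
  assert (Hnd2 : 1 / INR n < d2) by (pose proof (Rmin_r d1 d2); lra).
  assert (A1 := I1 (3*n)%nat (xs n) (xs n) (xs_0 n) (xs_end n Hn)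
     (xs_good n d1 Hn Hnd1) ltac:(intros i Hi; split; [lra | left; apply (xs_good n d1 Hn Hnd1 i Hi)])).
  assert (A2 := I2 (3*n)%nat (xs n) (xs n) (xs_0 n) (xs_end n Hn)
     (xs_good n d2 Hn Hnd2) ltac:(intros i Hi; split; [lra | left; apply (xs_good n d2 Hn Hnd2 i Hi)])).
  apply Rabs_def2 in A1. apply Rabs_def2 in A2.
  assert (N := rs_sum_nonneg F (fun y => (y - m1)^2) (xs n) (xs n) (3*n) Hmon
    ltac:(intros; apply pow2_ge_0)
    ltac:(intros; apply (xs_good n d1 Hn Hnd1); auto)).
  rewrite rs_sum_quad, xs_end, xs_0 in N by auto.
  rewrite (Hhi 1), (Hlo (-2)) in N by lra.
  assert (eps * (2 * (1 + 2*m1)) = m1^2 - m2) by (unfold eps; field; lra).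
  nra.
Qed.

Definition H (s y : R) : R := if Rlt_dec y s then 0 else 1.

Definition cont_at (g : R -> R) (s : R) : Prop :=
  forall eps, 0 < eps -> exists d, 0 < d /\
    forall t, Rabs (t - s) < d -> Rabs (g t - g s) < eps.

Lemma RS_step (g : R -> R) (s a b eps d : R) (n : nat) (x t : nat -> R) :
  a < s <= b ->
  (forall u, Rabs (u - s) < d -> Rabs (g u - g s) < eps) ->
  x O = a -> x n = b ->
  (forall i, (i < n)%nat -> x i < x (S i) /\ x (S i) - x i < d) ->
  (forall i, (i < n)%nat -> x i <= t i <= x (S i)) ->
  Rabs (rs_sum (H s) g x t n - g s) < eps.
Proof.
  intros Hs Hg H0 Hn Hx Ht.
  assert (P : forall k, (k <= n)%nat ->
    (x k < s -> rs_sum (H s) g x t k = 0) /\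
    (s <= x k -> Rabs (rs_sum (H s) g x t k - g s) < eps)).
  { induction k; intros Hk.
    - simpl. split; [auto | intros; lra].
    - destruct (IHk ltac:(lia)) as [A B].
      destruct (Hx k ltac:(lia)) as [X1 X2].
      destruct (Ht k ltac:(lia)) as [T1 T2].
      cbn [rs_sum].
      destruct (Rlt_dec (x (S k)) s); destruct (Rlt_dec (x k) s).
      + assert (E1 : H s (x (S k)) = 0) by (unfold H; destruct (Rlt_dec (x (S k)) s); lra).
        assert (E2 : H s (x k) = 0) by (unfold H; destruct (Rlt_dec (x k) s); lra).
        rewrite E1, E2, A by auto. split; intros; lra.
      + lra.
      + assert (E1 : H s (x (S k)) = 1) by (unfold H; destruct (Rlt_dec (x (S k)) s); lra).
        assert (E2 : H s (x k) = 0) by (unfold H; destruct (Rlt_dec (x k) s); lra).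
        rewrite E1, E2, A by auto. split; [intros; lra|intros].
        replace (0 + g (t k) * (1 - 0) - g s) with (g (t k) - g s) by ring.
        apply Hg. apply Rabs_def1; lra.
      + assert (E1 : H s (x (S k)) = 1) by (unfold H; destruct (Rlt_dec (x (S k)) s); lra).
        assert (E2 : H s (x k) = 1) by (unfold H; destruct (Rlt_dec (x k) s); lra).
        rewrite E1, E2. split; [intros; lra|intros].
        replace (rs_sum (H s) g x t k + g (t k) * (1 - 1) - g s)
          with (rs_sum (H s) g x t k - g s) by ring.
        apply B; lra. }
  apply (P n (le_n n)). lra.
Qed.

Lemma cont_id s : cont_at (fun y => y) s.
Proof. intros eps He. exists eps; split; auto. Qed.

Lemma cont_sq s : cont_at (fun y => y ^ 2) s.
Proof.
  intros eps He. exists (Rmin 1 (eps / (2 * Rabs s + 1))).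
  assert (Hs : 0 <= Rabs s) by apply Rabs_pos.
  assert (Hq : 0 < eps / (2 * Rabs s + 1)) by (apply Rdiv_lt_0_compat; lra).
  split. apply Rmin_pos; lra.
  intros u Hu.
  assert (Hu1 : Rabs (u - s) < 1) by (pose proof (Rmin_l 1 (eps / (2 * Rabs s + 1))); lra).
  assert (Hu2 : Rabs (u - s) < eps / (2 * Rabs s + 1))
    by (pose proof (Rmin_r 1 (eps / (2 * Rabs s + 1))); lra).
  replace (u ^ 2 - s ^ 2) with ((u - s) * ((u - s) + 2 * s)) by ring.
  rewrite Rabs_mult.
  assert (Rabs ((u - s) + 2 * s) <= Rabs (u - s) + 2 * Rabs s).
  { eapply Rle_trans. apply Rabs_triang. rewrite Rabs_mult, (Rabs_pos_eq 2) by lra. lra. }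
  assert (Hp : 0 <= Rabs (u - s)) by apply Rabs_pos.
  assert (Rabs (u - s) * (2 * Rabs s + 1) < eps).
  { apply (Rmult_lt_reg_r (/ (2 * Rabs s + 1))). apply Rinv_0_lt_compat; lra.
    rewrite Rmult_assoc, Rinv_r, Rmult_1_r by lra. exact Hu2. }
  assert (0 <= Rabs (u - s + 2 * s)) by apply Rabs_pos.
  nra.
Qed.

Lemma expect_G (g : R -> R) (p c : R) :
  0 <= p <= 1 -> 0 < c <= 1 -> cont_at g 0 -> cont_at g c ->
  expect (fun y => p * H 0 y + (1 - p) * H c y) g (p * g 0 + (1 - p) * g c).
Proof.
  intros Hp Hc C0 Cc eps He.
  destruct (C0 eps He) as [d0 [Hd0 G0]].
  destruct (Cc eps He) as [dc [Hdc Gc]].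
  exists (Rmin d0 dc). split. apply Rmin_pos; auto.
  intros n x t Hx0 Hxn Hx Ht.
  assert (A0 : Rabs (rs_sum (H 0) g x t n - g 0) < eps).
  { apply (RS_step g 0 (-2) 1 eps d0 n x t); auto; try lra.
    intros i Hi; destruct (Hx i Hi); pose proof (Rmin_l d0 dc); split; lra. }
  assert (Ac : Rabs (rs_sum (H c) g x t n - g c) < eps).
  { apply (RS_step g c (-2) 1 eps dc n x t); auto; try lra.
    intros i Hi; destruct (Hx i Hi); pose proof (Rmin_r d0 dc); split; lra. }
  rewrite rs_sum_lin.
  replace (p * rs_sum (H 0) g x t n + (1 - p) * rs_sum (H c) g x t n -
     (p * g 0 + (1 - p) * g c)) with
     (p * (rs_sum (H 0) g x t n - g 0) + (1 - p) * (rs_sum (H c) g x t n - g c)) by ring.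
  eapply Rle_lt_trans. apply Rabs_triang.
  rewrite !Rabs_mult, (Rabs_pos_eq p), (Rabs_pos_eq (1 - p)) by lra.
  destruct (Rlt_or_le 0 p).
  - assert (p * Rabs (rs_sum (H 0) g x t n - g 0) < p * eps) by (apply Rmult_lt_compat_l; lra).
    assert ((1 - p) * Rabs (rs_sum (H c) g x t n - g c) <= (1 - p) * eps)
      by (apply Rmult_le_compat_l; lra). lra.
  - assert (p = 0) by lra. subst p.
    lra.
Qed.

Lemma G_cdf (p c : R) : 0 <= p <= 1 -> 0 < c <= 1 ->
  cdf_pm1 (fun y => p * H 0 y + (1 - p) * H c y).
Proof.
  intros Hp Hc. unfold cdf_pm1, H. split; [|split; [|split]].
  - intros u v Huv.
    destruct (Rlt_dec u 0); destruct (Rlt_dec v 0);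
    destruct (Rlt_dec u c); destruct (Rlt_dec v c); nra.
  - intros u Hu. destruct (Rlt_dec u 0); destruct (Rlt_dec u c); lra.
  - intros u Hu. destruct (Rlt_dec u 0); destruct (Rlt_dec u c); lra.
  - intros u eps He.
    exists (Rmin (if Rlt_dec u 0 then - u else 1) (if Rlt_dec u c then c - u else 1)).
    split.
    + apply Rmin_pos; [destruct (Rlt_dec u 0)|destruct (Rlt_dec u c)]; lra.
    + intros y Hy.
      pose proof (Rmin_l (if Rlt_dec u 0 then - u else 1) (if Rlt_dec u c then c - u else 1)).
      pose proof (Rmin_r (if Rlt_dec u 0 then - u else 1) (if Rlt_dec u c then c - u else 1)).
      destruct (Rlt_dec u 0); destruct (Rlt_dec u c);
      destruct (Rlt_dec y 0); destruct (Rlt_dec y c); lra.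
Qed.

Theorem mainTheorem4 (F : R -> R) (m1 m2 : R) :
  cdf_pm1 F -> mu1_is F m1 -> mu2_is F m2 -> 0 < m1 ->
  ((exists G : R -> R, exists g1 g2 : R,
      cdf_pm1 G /\ mu1_is G g1 /\ mu2_is G g2 /\
      g1 = m1 /\ g2 = m2 /\ 0 < g2 /\ 0 < m2 /\
      Ccoef g1 g2 = Ccoef m1 m2 /\ Ccoef m1 m2 = prob_le G 0)
   <-> (0 < m2 /\ m2 <= m1)).
Proof.
  intros HF H1 H2 Hm1. split.
  - intros [G [g1 [g2 [HG [G1 [G2 [E1 [E2 [P2 [Pm2 [C1 C2]]]]]]]]]]].
    subst g1 g2. split; auto.
    assert (L := mean_le G m1 HG G1).
    unfold Ccoef, prob_le in C2.
    assert (m1 ^ 2 / m2 * m2 = m1 ^ 2) by (field; lra).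
    nra.
  - intros [Pm2 Hle].
    assert (J := jensen F m1 m2 HF H1 H2 Hm1).
    set (p := 1 - m1 ^ 2 / m2). set (c := m2 / m1).
    assert (Hq : m1 ^ 2 / m2 * m2 = m1 ^ 2) by (field; lra).
    assert (Hq0 : 0 < m1 ^ 2 / m2) by (apply Rdiv_lt_0_compat; nra).
    assert (Hp : 0 <= p <= 1) by (unfold p; nra).
    assert (Hcc : c * m1 = m2) by (unfold c; field; lra).
    assert (Hc : 0 < c <= 1) by (split; nra).
    exists (fun y => p * H 0 y + (1 - p) * H c y), m1, m2.
    assert (E1 : p * 0 + (1 - p) * c = m1) by (unfold p, c; field; lra).
    assert (E2 : p * 0 ^ 2 + (1 - p) * c ^ 2 = m2) by (unfold p, c; field; lra).
    split; [apply G_cdf; auto|].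
    split. { unfold mu1_is. rewrite <- E1.
      apply (expect_G (fun y => y)); auto; apply cont_id. }
    split. { unfold mu2_is. rewrite <- E2.
      apply (expect_G (fun y => y ^ 2)); auto; apply cont_sq. }
    split; [auto|]. split; [auto|]. split; [auto|]. split; [auto|].
    split; [auto|].
    unfold prob_le, H, Ccoef. fold p.
    destruct (Rlt_dec 0 0); [lra|]. destruct (Rlt_dec 0 c); [ring|lra].
Qed.
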